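(* Let $G$ be a finite simple graph. Then $\mathrm{mur}(G)=0$ if and only if $G$ or its complement $\overline{G}$ is a complete graph.
   Context: For a finite simple undirected graph $G$ on vertices $v_1,\dots,v_n$, let $A_G$ be its $(0,1)$-adjacency matrix, $D_G=\mathrm{diag}(d_1,\dots,d_n)$ with $d_i$ the degree of $v_i$, $I$ the $n\times n$ identity matrix and $J$ the $n\times n$ all-ones matrix. A universal adjacency matrix of $G$ is any matrix $\alpha A_G+\beta I+\gamma J+\delta D_G$ with real scalars $\alpha,\beta,\gamma,\delta$ and $\alpha\neq 0$. The minimum universal rank $\mathrm{mur}(G)$ is the minimum rank over all universal adjacency matrices of $G$. *)

(* Defs.v *)
From mathcomp Require Import all_boot all_order all_algebra.
From mathcomp Require Import all_classical all_reals.
Set Implicit Arguments. Unset Strict Implicit. Unset Printing Implicit Defensive.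
Import Order.TTheory GRing.Theory Num.Theory.
Local Open Scope ring_scope.

Definition simple_graph (n : nat) (e : rel 'I_n) : Prop :=
  (forall i, ~~ e i i) /\ (forall i j, e i j = e j i).

Definition complete (n : nat) (e : rel 'I_n) : Prop :=
  forall i j, i != j -> e i j.

Definition compl_graph (n : nat) (e : rel 'I_n) : rel 'I_n :=
  fun i j => (i != j) && ~~ e i j.

Section Mats.
Variable R : realType.
Variable n : nat.
Variable e : rel 'I_n.

Definition adjmx : 'M[R]_n := \matrix_(i, j) (e i j)%:R.
Definition degmx : 'M[R]_n :=
  \matrix_(i, j) ((i == j)%:R * (#|[pred k | e i k]|)%:R).
Definition Jmx : 'M[R]_n := const_mx 1.

Definition univ_adj (alpha beta gamma delta : R) : 'M[R]_n :=
  alpha *: adjmx + beta *: 1%:M + gamma *: Jmx + delta *: degmx.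

Definition univ_rank (r : nat) : Prop :=
  exists alpha beta gamma delta : R,
    alpha != 0 /\ \rank (univ_adj alpha beta gamma delta) = r.

Lemma univ_rank_ex : exists r, univ_rank r.
Proof. by exists (\rank (univ_adj 1 0 0 0)); exists 1, 0, 0, 0; rewrite oner_eq0. Qed.

Definition univ_rankb (r : nat) : bool := `[< univ_rank r >].

Lemma univ_rankb_ex : exists r, univ_rankb r.
Proof. by have [r Hr] := univ_rank_ex; exists r; apply/asboolP. Qed.

Definition mur : nat := ex_minn univ_rankb_ex.
End Mats.

(* Main.v *)
Require Import Defs.
From mathcomp Require Import all_boot all_order all_algebra.
From mathcomp Require Import all_classical all_reals.
Import Order.TTheory GRing.Theory Num.Theory.
Local Open Scope ring_scope.

Lemma entry_off (R : realType) (n : nat) (e : rel 'I_n) (a b g d : R) (i j : 'I_n) :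
  i != j -> univ_adj e a b g d i j = a * (e i j)%:R + g.
Proof.
move=> ij; rewrite /univ_adj !mxE (negbTE ij) /=.
by rewrite mul0r !mulr0 !addr0 mulr1.
Qed.

Theorem theorem2 (R : realType) (n : nat) (e : rel 'I_n) :
  simple_graph e ->
  (mur R e = 0%N <-> (complete e \/ complete (compl_graph e))).
Proof.
move=> [irr sym].
have mur0 : mur R e = 0%N <-> univ_rank R e 0.
  rewrite /mur; case: ex_minnP => m /asboolP Hm Hmin; split.
    by move=> m0; rewrite -m0.
  by move=> H0; have := Hmin 0%N (asboolT H0); rewrite leqn0 => /eqP.
rewrite mur0; split.
  move=> [a [b [g [d [a0 /eqP]]]]]; rewrite mxrank_eq0 => /eqP M0.
  have off : forall i j : 'I_n, i != j -> a * (e i j)%:R + g = 0.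
    by move=> i j ij; rewrite -(@entry_off R n e a b g d i j ij) M0 mxE.
  case: (boolP [forall i, forall j, (i != j) ==> e i j]).
    move/forallP=> H; left=> i j ij.
    by have /forallP/(_ j)/implyP := H i; apply.
  rewrite negb_forall => /existsP [i]; rewrite negb_forall => /existsP [j].
  rewrite negb_imply => /andP [ij nij].
  have g0 : g = 0 by have := off i j ij; rewrite (negbTE nij) mulr0 add0r.
  right=> k l kl; rewrite /compl_graph kl /=; apply/negP=> ekl.
  by have := off k l kl; rewrite ekl g0 addr0 mulr1 => /eqP; rewrite (negbTE a0).
move=> [C|C].
  exists 1, 1, (-1), 0; split; first by rewrite oner_eq0.
  apply/eqP; rewrite mxrank_eq0; apply/eqP/matrixP=> i j.
  case: (eqVneq i j) => [->|ij].
    by rewrite /univ_adj !mxE eqxx (negbTE (irr j)) /= mulr0 add0r mul0r addr0 !mulr1 addrN.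
  by rewrite entry_off // C // mul1r addrN mxE.
exists 1, 0, 0, 0; split; first by rewrite oner_eq0.
apply/eqP; rewrite mxrank_eq0; apply/eqP/matrixP=> i j.
case: (eqVneq i j) => [->|ij].
  by rewrite /univ_adj !mxE eqxx (negbTE (irr j)) /= !mul0r !mulr0 !addr0.
rewrite entry_off //.
have := C i j ij; rewrite /compl_graph ij /= => /negbTE ->.
by rewrite mulr0 addr0 mxE.
Qed.
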